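(* Let $k\ge 2$ be an integer and $i=4k-1$. Then for every $n\in\{2,3,\dots,k\}$, the numerical semigroup $S(i)$ admits a factorization into irreducible numerical semigroups of length $n$. Moreover, if $k\ge 3$, then $S(4k-1)$ admits at least two distinct factorizations of length $k$.
   Context: $\mathbb{N}$ denotes the non-negative integers. A numerical semigroup is a submonoid of $(\mathbb{N},+)$ with finite complement. A numerical semigroup is irreducible if it cannot be written as the intersection of two numerical semigroups properly containing it. For an odd integer $j\ge 3$, $T(j)=\{0,\tfrac{j+1}{2},\tfrac{j+1}{2}+1,\dots,j-1\}\cup\{n\in\mathbb{Z}:n\ge j+1\}$. For odd $i\ge5$, $S(i)=\langle 2,i\rangle\cap T(i)$, where $\langle 2,i\rangle=\{2x+iy:x,y\in\mathbb{N}\}$. Given a numerical semigroup $S$ and irreducible numerical semigroups $S_1,\dots,S_n$, the expression $S_1\cap\dots\cap S_n$ is a factorization of $S$ (of length $n$) if $S=S_1\cap\dots\cap S_n$ and $S\neq\bigcap_{j\in J}S_j$ for every nonempty proper subset $J\subsetneq\{1,\dots,n\}$. Two factorizations are distinct if their sets of factors $\{S_1,\dots,S_n\}$ differ. *)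

(* Defs.v *)
From Stdlib Require Import Arith Lia.

Definition nset := nat -> Prop.

Definition seteq (A B : nset) : Prop := forall x, A x <-> B x.

Definition subset (A B : nset) : Prop := forall x, A x -> B x.

Definition proper_subset (A B : nset) : Prop :=
  subset A B /\ exists x, B x /\ ~ A x.

Definition is_numsg (S : nset) : Prop :=
  S 0 /\ (forall x y, S x -> S y -> S (x + y)) /\
  exists N, forall x, N <= x -> S x.

Definition irreducible (S : nset) : Prop :=
  is_numsg S /\
  ~ (exists S1 S2, is_numsg S1 /\ is_numsg S2 /\
       proper_subset S S1 /\ proper_subset S S2 /\
       seteq S (fun x => S1 x /\ S2 x)).

Definition T (j : nat) : nset :=
  fun x => x = 0 \/ ((j + 1) / 2 <= x /\ x <= j - 1) \/ j + 1 <= x.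

Definition gen2 (i : nat) : nset :=
  fun x => exists a b, x = 2 * a + i * b.

Definition Ssg (i : nat) : nset := fun x => gen2 i x /\ T i x.

Definition is_factorization (S : nset) (n : nat) (F : nat -> nset) : Prop :=
  (forall j, j < n -> irreducible (F j)) /\
  seteq S (fun x => forall j, j < n -> F j x) /\
  (forall J : nat -> Prop,
      (exists j, j < n /\ J j) -> (exists j, j < n /\ ~ J j) ->
      ~ seteq S (fun x => forall j, j < n -> J j -> F j x)).

Definition distinct_factors (n : nat) (F : nat -> nset) (m : nat) (G : nat -> nset) : Prop :=
  (exists j, j < n /\ forall l, l < m -> ~ seteq (F j) (G l)) \/
  (exists l, l < m /\ forall j, j < n -> ~ seteq (G l) (F j)).

(* Main.v *)
Require Import Defs.
From Stdlib Require Import Arith Lia.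

Definition K (m : nat) : nset := fun x => x = 0 \/ (m + 1 <= x /\ x <> 2*m+1).
Definition A (m : nat) : nset := fun x => (exists a, x = 2*a) \/ 2*m+1 < x.
Definition P (k : nat) : nset :=
  fun x => x = 0 \/ (2*k <= x /\ exists a, x = 2*a) \/ 4*k+1 <= x.

Lemma irr_crit (S : nset) (f : nat) : is_numsg S -> ~ S f ->
  (forall x, ~ S x -> x <= f /\ (S (f - x) \/ x + x = f)) -> irreducible S.
Proof.
  intros HS Hf H. split; [exact HS|].
  intros (S1 & S2 & H1 & H2 & [Hs1 [y1 [Hy1 Hny1]]] & [Hs2 [y2 [Hy2 Hny2]]] & Heq).
  apply Hf. apply Heq. split.
  - destruct H1 as [_ [Hadd _]]. destruct (H y1 Hny1) as [Hle [Hd|Hd]].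
    + replace f with (y1 + (f - y1)) by lia. apply Hadd; auto.
    + rewrite <- Hd. auto.
  - destruct H2 as [_ [Hadd _]]. destruct (H y2 Hny2) as [Hle [Hd|Hd]].
    + replace f with (y2 + (f - y2)) by lia. apply Hadd; auto.
    + rewrite <- Hd. auto.
Qed.

Lemma K_irr m : irreducible (K m).
Proof.
  apply (irr_crit _ (2*m+1)).
  - split; [left; reflexivity|split].
    + intros x y Hx Hy; unfold K in *; lia.
    + exists (2*m+2). intros x Hx. unfold K; lia.
  - unfold K; lia.
  - intros x Hx. unfold K in *. split; [lia|left; lia].
Qed.

Lemma A_irr m : irreducible (A m).
Proof.
  apply (irr_crit _ (2*m+1)).
  - split; [left; exists 0; reflexivity|split].
    + intros x y [[a Ha]|Ha] [[b Hb]|Hb].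
      * left; exists (a+b); lia.
      * right; lia.
      * right; lia.
      * right; lia.
    + exists (2*m+2). intros x Hx. right; lia.
  - intros [[a Ha]|Ha]; lia.
  - intros x Hx. assert (x <= 2*m+1).
    { destruct (le_lt_dec x (2*m+1)); auto. exfalso; apply Hx; right; lia. }
    split; [lia|left].
    destruct (Nat.Even_or_Odd x) as [[a Ha]|[a Ha]].
    + exfalso; apply Hx; left; exists a; lia.
    + left; exists (m - a); lia.
Qed.

Lemma Ssg_char k x : 1 <= k -> (Ssg (4*k-1) x <-> P k x).
Proof.
  intros Hk. unfold Ssg, gen2, T, P.
  assert (Hd: (4*k-1+1)/2 = 2*k).
  { replace (4*k-1+1) with (2*k*2) by lia. apply Nat.div_mul. lia. }
  rewrite Hd. split.
  - intros [[a [b Hx]] Ht]. destruct b as [|b].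
    + destruct Ht as [H0|[H1|H2]];
        [left; lia| right; left; split; [lia| exists a; lia]
        | right; left; split; [lia|exists a; lia]].
    + assert (x >= 4*k-1) by nia.
      destruct (Nat.eq_dec x (4*k)).
      * right; left; split; [lia|exists (2*k); lia].
      * right; right; lia.
  - intros [H0|[[H1 [a Ha]]|H2]].
    + split; [exists 0, 0; lia | left; lia].
    + split; [exists a, 0; lia | right; lia].
    + split; [|right; right; lia].
      destruct (Nat.Even_or_Odd x) as [[a Ha]|[a Ha]];
        [exists a, 0; lia | exists (a - (2*k-1)), 1; lia].
Qed.

Lemma min_crit (S : nset) n (F : nat -> nset) :
  (forall j0, j0 < n -> exists p, ~ S p /\ forall j, j < n -> j <> j0 -> F j p) ->
  forall J : nat -> Prop, (exists j, j<n /\ J j) -> (exists j, j < n /\ ~ J j) ->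
  ~ seteq S (fun x => forall j, j<n -> J j -> F j x).
Proof.
  intros H J _ [j0 [Hj0 HJ0]] Heq. destruct (H j0 Hj0) as [p [Hp Hall]].
  apply Hp. apply Heq. intros j Hj HJ. apply Hall; auto.
  intro; subst; contradiction.
Qed.

Definition FF k n j := if j <? n - 1 then K (2*k-1-j) else A (2*k-n).
Definition GG k j := K (2*k-1-j).

Lemma factF k n : 2 <= n -> n <= k -> is_factorization (Ssg (4*k-1)) n (FF k n).
Proof.
  intros Hn Hnk. split; [|split].
  - intros j Hj. unfold FF. destruct (j <? n-1); [apply K_irr|apply A_irr].
  - intros x. rewrite Ssg_char by lia. split.
    + intros HP j Hj. unfold FF. destruct (Nat.ltb_spec j (n-1)).
      * unfold K. destruct HP as [H0|[[H1 [a Ha]]|H2]]; lia.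
      * unfold A. destruct HP as [H0|[[H1 [a Ha]]|H2]];
          [left; exists 0; lia| left; exists a; lia | right; lia].
    + intros Hall. assert (H0 := Hall 0 ltac:(lia)). unfold FF in H0.
      destruct (Nat.ltb_spec 0 (n-1)); [|lia]. unfold K in H0.
      destruct (Nat.Even_or_Odd x) as [[a Ha]|[a Ha]].
      * destruct H0 as [H0|H0]; [left; lia| right; left; split; [lia| exists a; lia]].
      * destruct H0 as [H0|H0]; [left; lia|]. right; right.
        destruct (le_lt_dec (4*k+1) x); [lia|exfalso].
        destruct (le_lt_dec a (2*k-n)).
        -- assert (H1 := Hall (n-1) ltac:(lia)). unfold FF in H1.
           destruct (Nat.ltb_spec (n-1) (n-1)); [lia|]. unfold A in H1.
           destruct H1 as [[b Hb]|Hb]; lia.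
        -- assert (H1 := Hall (2*k-1-a) ltac:(lia)). unfold FF in H1.
           destruct (Nat.ltb_spec (2*k-1-a) (n-1)); [|lia]. unfold K in H1. lia.
  - apply min_crit. intros j0 Hj0. destruct (Nat.ltb_spec j0 (n-1)).
    + exists (4*k-1-2*j0). split.
      * rewrite Ssg_char by lia. intros [H0|[[H1 [a Ha]]|H2]]; lia.
      * intros j Hj Hne. unfold FF. destruct (Nat.ltb_spec j (n-1));
          [unfold K; lia | unfold A; right; lia].
    + exists (4*k+1-2*n). split;
        [rewrite Ssg_char by lia; intros [H0|[[H1 [a Ha]]|H2]]; lia|].
      intros j Hj Hne. unfold FF. destruct (Nat.ltb_spec j (n-1)); [unfold K; lia| lia].
Qed.

Lemma factG k : 2 <= k -> is_factorization (Ssg (4*k-1)) k (GG k).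
Proof.
  intros Hk. split; [|split].
  - intros j Hj. apply K_irr.
  - intros x. rewrite Ssg_char by lia. split.
    + intros HP j Hj. unfold GG, K. destruct HP as [H0|[[H1 [a Ha]]|H2]]; lia.
    + intros Hall. assert (H0 := Hall 0 ltac:(lia)). unfold GG, K in H0.
      destruct (Nat.Even_or_Odd x) as [[a Ha]|[a Ha]].
      * destruct H0 as [H0|H0]; [left; lia| right; left; split; [lia| exists a; lia]].
      * destruct H0 as [H0|H0]; [left; lia|]. right; right.
        destruct (le_lt_dec (4*k+1) x); [lia|exfalso].
        assert (H1 := Hall (2*k-1-a) ltac:(lia)). unfold GG, K in H1. lia.
  - apply min_crit. intros j0 Hj0.
    exists (4*k-1-2*j0). split.
    + rewrite Ssg_char by lia. intros [H0|[[H1 [a Ha]]|H2]]; lia.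
    + intros j Hj Hne. unfold GG, K. lia.
Qed.

Theorem mainTheorem4 (k : nat) (hk : 2 <= k) :
  (forall n, 2 <= n -> n <= k ->
     exists F, is_factorization (Ssg (4 * k - 1)) n F) /\
  (3 <= k ->
     exists F G, is_factorization (Ssg (4 * k - 1)) k F /\
                 is_factorization (Ssg (4 * k - 1)) k G /\
                 distinct_factors k F k G).
Proof.
  split.
  - intros n H2 Hn. exists (FF k n). apply factF; lia.
  - intros H3. exists (FF k k), (GG k).
    split; [apply factF; lia|]. split; [apply factG; lia|].
    left. exists (k-1). split; [lia|]. intros l Hl Heq.
    destruct (Heq 2) as [Hx _]. unfold FF in Hx.
    destruct (Nat.ltb_spec (k-1) (k-1)); [lia|].
    assert (HA : A (2*k-k) 2) by (left; exists 1; reflexivity).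
    specialize (Hx HA). unfold GG, K in Hx. lia.
Qed.
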